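(* Let $\mathcal{G}$, $u$, $v$ be as in the context, and suppose the weights of the red edges $e$ are independent random variables, each with a probability density function $f_e:(0,\infty)\to[0,\phi_e]$ for some $\phi_e>0$, while green edge weights are fixed. Then for every $0\le r<r_{tot}$ and every $\varepsilon>0$, $$\mathbb{P}\big(\Delta(r)\le r+\varepsilon\big)\le\Big(\sum_{e\text{ red}}\phi_e\Big)\cdot\varepsilon .$$
   Context: $\mathcal{G}=\langle V,E,\omega,\lambda\rangle$ is a finite weighted coloured--edge graph (directed multigraph, weights $\omega:E\to\mathbb{R}^+$, colours $\lambda:E\to M$) with $M=\{\text{red},\text{green}\}$. A path from $u$ to $v$ is a sequence of consecutive edges from $u$ to $v$ visiting no vertex twice; $\omega_{\text{red}}(p)$, $\omega_{\text{green}}(p)$ denote the sums of weights of the red, resp. green, edges of $p$. A path $p$ from $u$ to $v$ is minimal if there is no path $q$ from $u$ to $v$ with $\omega_{\text{red}}(q)\le\omega_{\text{red}}(p)$, $\omega_{\text{green}}(q)\le\omega_{\text{green}}(p)$ and at least one inequality strict. It is assumed there is a path from $u$ to $v$ all of whose edges are green and a path from $u$ to $v$ all of whose edges are red; $r_{tot}$ is the least red weight of a path from $u$ to $v$ all of whose edges are red. For $0\le r<r_{tot}$, $\Delta(r)$ is the least value of $\omega_{\text{red}}(q)$ over all minimal paths $q$ from $u$ to $v$ with $\omega_{\text{red}}(q)>r$. *)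

(* Defs.v *)
From HB Require Import structures.
From mathcomp Require Import all_boot all_order all_algebra.
From mathcomp Require Import all_classical all_reals all_analysis.
Set Implicit Arguments. Unset Strict Implicit. Unset Printing Implicit Defensive.
Import Order.TTheory GRing.Theory Num.Theory.
Local Open Scope classical_set_scope.
Local Open Scope ring_scope.

Section Graph.
Variables (R : realType) (V E : finType) (src tgt : E -> V) (red : E -> bool).

Fixpoint walk (x y : V) (s : seq E) : bool :=
  match s with
  | [::] => x == y
  | e :: s' => (src e == x) && walk (tgt e) y s'
  end.

Definition is_path (x y : V) (s : seq E) : bool :=
  walk x y s && uniq (x :: map tgt s).

Definition wred (w : E -> R) (s : seq E) : R := \sum_(e <- s | red e) w e.
Definition wgreen (w : E -> R) (s : seq E) : R := \sum_(e <- s | ~~ red e) w e.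

Definition minimal_path (w : E -> R) (x y : V) (p : seq E) : Prop :=
  is_path x y p /\
  ~ (exists q, [/\ is_path x y q, wred w q <= wred w p, wgreen w q <= wgreen w p
                 & (wred w q < wred w p) || (wgreen w q < wgreen w p)]).

Definition r_tot (w : E -> R) (x y : V) : R :=
  inf [set t | exists s, [/\ is_path x y s, all red s & t = wred w s]].

Definition Delta (w : E -> R) (x y : V) (r : R) : R :=
  inf [set t | exists q, [/\ minimal_path w x y q, r < wred w q & t = wred w q]].

End Graph.

Definition independent_rvs {d} {Omega : measurableType d} {R : realType}
  {I : finType} (P : probability Omega R) (Pe : pred I) (X : I -> Omega -> R) : Prop :=
  forall (S : {set I}) (A : I -> set R),
    (forall i, i \in S -> Pe i) ->
    (forall i, measurable (A i)) ->
    P (\bigcap_(i in [set i | i \in S]) (X i @^-1` A i)) =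
    (\prod_(i in S) P (X i @^-1` A i))%E.

Definition has_density {d} {Omega : measurableType d} {R : realType}
  (P : probability Omega R) (X : Omega -> R) (f : R -> R) : Prop :=
  forall A : set R, measurable A ->
    P (X @^-1` A) = (\int[lebesgue_measure]_(x in A) (f x)%:E)%E.

(* Main.v *)
Require Import Defs.
From HB Require Import structures.
From mathcomp Require Import all_boot all_order all_algebra.
From mathcomp Require Import all_classical all_reals all_analysis.
From mathcomp Require Import ring lra.
Import Order.TTheory GRing.Theory Num.Theory.
Local Open Scope classical_set_scope.
Local Open Scope ring_scope.
Set Implicit Arguments. Unset Strict Implicit. Unset Printing Implicit Defensive.

Section MBool.
Context d (T : measurableType d) (R : realType).
Definition MB (b : T -> bool) := measurable_fun setT b.

Lemma MB_set b : MB b -> measurable [set x | b x].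
Proof.
move=> mb; have := mb measurableT [set true] I.
by rewrite setTI.
Qed.

Lemma MB_le (f g : T -> R) : measurable_fun setT f -> measurable_fun setT g ->
  MB (fun x => f x <= g x).
Proof. exact: measurable_realfun.measurable_fun_ler. Qed.

Lemma MB_lt (f g : T -> R) : measurable_fun setT f -> measurable_fun setT g ->
  MB (fun x => f x < g x).
Proof. exact: measurable_realfun.measurable_fun_ltr. Qed.

Lemma MB_cst (b : bool) : MB (fun _ => b).
Proof. exact: measurable_cst. Qed.

Lemma MB_and b1 b2 : MB b1 -> MB b2 -> MB (fun x => b1 x && b2 x).
Proof. exact: measurable_and. Qed.

Lemma MB_or b1 b2 : MB b1 -> MB b2 -> MB (fun x => b1 x || b2 x).
Proof. exact: measurable_or. Qed.

Lemma MB_neg b1 : MB b1 -> MB (fun x => ~~ b1 x).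
Proof. exact: measurable_neg. Qed.

Lemma MB_all (I : Type) (s : seq I) (b : I -> T -> bool) :
  (forall i, MB (b i)) -> MB (fun x => all (fun i => b i x) s).
Proof.
move=> mb; elim: s => [|i s IH] /=; first exact: MB_cst.
exact: MB_and.
Qed.

Lemma MB_has (I : Type) (s : seq I) (b : I -> T -> bool) :
  (forall i, MB (b i)) -> MB (fun x => has (fun i => b i x) s).
Proof.
move=> mb; elim: s => [|i s IH] /=; first exact: MB_cst.
exact: MB_or.
Qed.

Lemma MR_sum (I : Type) (s : seq I) (P : pred I) (h : I -> T -> R) :
  (forall i, P i -> measurable_fun setT (h i)) ->
  measurable_fun setT (fun x => \sum_(i <- s | P i) h i x).
Proof.
move=> mh.
have -> : (fun x => \sum_(i <- s | P i) h i x) =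
          (fun x => \sum_(i <- s) (if P i then h i x else 0)).
  by apply: funext => x /=; rewrite (big_mkcond P).
apply: measurable_sum => i; case Pi: (P i); [exact: mh | exact: measurable_cst].
Qed.

End MBool.

Section Codes.
Variable E : finType.
Definition Code := {ffun 'I_#|E| -> option E}.
Definition dec (c : Code) : seq E := pmap id [seq c i | i <- enum 'I_#|E|].
Definition enc (s : seq E) : Code := [ffun i : 'I_#|E| => nth None (map Some s) i].

Lemma pmap_some (s : seq E) : pmap id (map Some s) = s.
Proof. by elim: s => //= a s ->. Qed.

Lemma pmap_nseq n : pmap (@id (option E)) (nseq n None) = [::].
Proof. by elim: n. Qed.

Lemma decK (s : seq E) : (size s <= #|E|)%N -> dec (enc s) = s.
Proof.
move=> hs; rewrite /dec.
have -> : [seq enc s i | i <- enum 'I_#|E|] =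
          [seq nth None (map Some s) j | j <- iota 0 #|E|].
  by rewrite -val_enum_ord -map_comp; apply: eq_map => i; rewrite /enc ffunE.
set t := map Some s.
have st : (size t <= #|E|)%N by rewrite size_map.
have -> : [seq nth None t j | j <- iota 0 #|E|] =
    [seq nth None (t ++ nseq (#|E| - size t) None) j | j <- iota 0 #|E|].
  apply: eq_map => j; rewrite nth_cat; case: ltnP => // hj.
  by rewrite nth_nseq nth_default //; case: ifP.
rewrite map_nth_iota0; last by rewrite size_cat size_nseq subnKC.
rewrite take_oversize ?size_cat ?size_nseq ?subnKC //.
by rewrite pmap_cat pmap_some pmap_nseq cats0.
Qed.
End Codes.

Lemma ex_min_seq (T : eqType) (R : realType) (s : seq T) (P : pred T) (F : T -> R) :
  has P s -> exists t0, [/\ t0 \in s, P t0 & forall t, t \in s -> P t -> F t0 <= F t].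
Proof.
elim: s => [|a s IH] //= hP.
case: (boolP (has P s)) => [/IH [t0 [t0s Pt0 Ht0]] | nh].
  case: (boolP (P a && (F a <= F t0))) => [/andP [Pa le] | nle].
    exists a; split => //; first by rewrite inE eqxx.
    move=> t; rewrite inE => /orP [/eqP -> //|ts Pt].
    exact: le_trans le (Ht0 t ts Pt).
  exists t0; split => //; first by rewrite inE t0s orbT.
  move=> t; rewrite inE => /orP [/eqP -> Pa|ts Pt]; last exact: Ht0.
  by move: nle; rewrite Pa /= -ltNge => /ltW.
have Pa : P a by move: hP; rewrite (negbTE nh) orbF.
exists a; split => //; first by rewrite inE eqxx.
move=> t; rewrite inE => /orP [/eqP -> //|ts Pt].
by move: nh => /hasPn /(_ t ts); rewrite Pt.
Qed.

Lemma ex_min_fin (T : finType) (R : realType) (P : pred T) (F : T -> R) :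
  (exists t, P t) -> exists t0, P t0 /\ forall t, P t -> F t0 <= F t.
Proof.
move=> [t Pt].
have [|t0 [_ Pt0 H]] := @ex_min_seq T R (enum T) P F.
  by apply/hasP; exists t => //; rewrite mem_enum.
by exists t0; split => // t' Pt'; apply: H => //; rewrite mem_enum.
Qed.

Section Comb.
Variables (R : realType) (V E : finType) (src tgt : E -> V) (red : E -> bool) (u v : V).

Definition okc (c : Code E) := is_path src tgt u v (dec c).

Lemma path_uniq x y (s : seq E) : is_path src tgt x y s -> uniq s.
Proof. by rewrite /is_path => /andP [_ /= /andP [_ /map_uniq]]. Qed.

Lemma path_size x y (s : seq E) : is_path src tgt x y s -> (size s <= #|E|)%N.
Proof.
move=> /path_uniq Us; rewrite cardE; apply: uniq_leq_size => // i _.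
by rewrite mem_enum.
Qed.

Lemma path_code (s : seq E) : is_path src tgt u v s -> dec (enc s) = s /\ okc (enc s).
Proof. by move=> hp; rewrite /okc decK //; exact: path_size hp. Qed.

Lemma min_path (Q : seq E -> Prop) (F : seq E -> R) :
  (forall s, Q s -> is_path src tgt u v s) -> (exists s, Q s) ->
  exists s0, Q s0 /\ forall s, Q s -> F s0 <= F s.
Proof.
move=> hQ [s Qs].
have [|c0 [Qc0 Hc0]] := @ex_min_fin (Code E) R (fun c => `[< Q (dec c) >])
   (fun c => F (dec c)).
  by exists (enc s); apply/asboolP; rewrite decK //; apply: path_size (hQ _ Qs).
move/asboolP in Qc0.
exists (dec c0); split => // s' Qs'.
have := Hc0 (enc s'); rewrite decK //; last exact: path_size (hQ _ Qs').
by apply; apply/asboolP.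
Qed.

Lemma inf_min (S : set R) (Q : seq E -> Prop) (F : seq E -> R) :
  (forall t, S t <-> exists s, Q s /\ t = F s) ->
  (forall s, Q s -> is_path src tgt u v s) -> (exists s, Q s) ->
  exists s0, [/\ Q s0, inf S = F s0 & forall s, Q s -> F s0 <= F s].
Proof.
move=> hS hQ hne; have [s0 [Qs0 minF]] := min_path F hQ hne.
exists s0; split => //.
have S0 : S (F s0) by apply/hS; exists s0.
have lb : lbound S (F s0) by move=> t /hS [s' [Qs' ->]]; exact: minF.
apply/eqP; rewrite eq_le; apply/andP; split.
  by apply: (ge_inf _ S0); exists (F s0).
by apply: lb_le_inf => //; exists (F s0).
Qed.

End Comb.

Lemma in_enumT (T : finType) (x : T) : x \in enum T.
Proof. by rewrite mem_enum. Qed.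

Section Comb2.
Variables (R : realType) (V E : finType) (src tgt : E -> V) (red : E -> bool) (u v : V).

Definition rest (x : E -> R) (e : E) (s : seq E) : R :=
  \sum_(i <- s | red i && (i != e)) x i.

Lemma sum_pos (s : seq E) (P : pred E) (x : E -> R) :
  (forall i, 0 < x i) -> has P s -> 0 < \sum_(i <- s | P i) x i.
Proof.
move=> hx; elim: s => //= a s IH; rewrite big_cons; case: ifP => Pa /=.
  move=> _; apply: lt_le_trans (hx a) _; rewrite lerDl.
  by apply: sumr_ge0 => i _; exact: ltW.
exact: IH.
Qed.

Lemma sum0_all (s : seq E) (P : pred E) (x : E -> R) :
  all (fun i => ~~ P i) s -> \sum_(i <- s | P i) x i = 0.
Proof.
move=> H; rewrite big_seq_cond big1 // => i /andP [iS Pi].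
by move: (allP H i iS); rewrite Pi.
Qed.

Lemma sum_sub (s t : seq E) (P : pred E) (x : E -> R) : uniq s -> uniq t ->
  (forall i, 0 <= x i) -> (forall i, i \in s -> P i -> i \in t) ->
  \sum_(i <- s | P i) x i <= \sum_(i <- t | P i) x i.
Proof.
move=> Us Ut hx H.
rewrite (big_mkcond P) (big_mkcond P) (big_uniq _ Us) (big_uniq _ Ut) /=.
rewrite [X in X <= _]big_mkcond [X in _ <= X]big_mkcond /=.
apply: ler_sum => i _.
have [iS|niS] := boolP (i \in s); have [Pi|nPi] := boolP (P i);
  have [it|nit] := boolP (i \in t);
  rewrite ?iS ?(negbTE niS) ?Pi ?(negbTE nPi) ?it ?(negbTE nit) //.
by move: nit; rewrite (H i iS Pi).
Qed.

Lemma rest_notin (x : E -> R) e s : e \notin s -> rest x e s = wred red x s.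
Proof.
move=> nes; rewrite /rest /wred big_seq_cond [RHS]big_seq_cond.
apply: eq_bigl => i; case: (boolP (i \in s)) => //= iS.
have -> : i != e by apply: contraNneq nes => <-.
by rewrite andbT.
Qed.

Lemma wred_split (x : E -> R) e s : uniq s -> e \in s -> red e ->
  wred red x s = x e + rest x e s.
Proof.
move=> Us es re; rewrite /wred /rest big_mkcond (bigD1_seq e) //= re.
by rewrite big_mkcondl.
Qed.

Definition dom (x : E -> R) (a b : seq E) : bool :=
  [&& wred red x a <= wred red x b, wgreen red x a <= wgreen red x b &
      (wred red x a < wred red x b) || (wgreen red x a < wgreen red x b)].

Definition mincode (x : E -> R) (q : seq E) : bool :=
  is_path src tgt u v q &&
  all (fun c => ~~ (okc src tgt u v c && dom x (dec c) q)) (enum (Code E)).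

Lemma minimalP (x : E -> R) q :
  minimal_path src tgt red x u v q <-> mincode x q.
Proof.
split.
  move=> [hp hn]; apply/andP; split => //; apply/allP => c _.
  apply/negP => /andP [okc1 d]; apply: hn; exists (dec c).
  by case/and3P: d => *; split.
move=> /andP [hp /allP ha]; split => // [[q' [hq' h1 h2 h3]]].
have [dq okq] := path_code hq'.
by move: (ha (enc q') (in_enumT _)); rewrite okq dq /dom h1 h2 h3.
Qed.

Lemma rtotP (x : E -> R) r : (exists s, is_path src tgt u v s && all red s) ->
  (r < r_tot src tgt red x u v <->
   forall s, is_path src tgt u v s -> all red s -> r < wred red x s).
Proof.
move=> [s0 /andP [p0 a0]]; rewrite /r_tot; set S := [set t | _].
have hS : forall t, S t <-> exists s, (is_path src tgt u v s /\ all red s) /\ t = wred red x s.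
  move=> t; split => [[s [hp ha ->]]|[s [[hp ha] ->]]]; by exists s.
have hQ : forall s, is_path src tgt u v s /\ all red s -> is_path src tgt u v s.
  by move=> s [].
have [s1 [[p1 a1] -> H1]] := inf_min hS hQ (ex_intro _ s0 (conj p0 a0)).
split => [rl s hp ha|H]; last exact: H.
exact: lt_le_trans rl (H1 s (conj hp ha)).
Qed.

Lemma DeltaP (x : E -> R) r c : 0 <= c ->
  (Delta src tgt red x u v r <= c <->
   (~ exists q, minimal_path src tgt red x u v q /\ r < wred red x q) \/
   exists q, [/\ minimal_path src tgt red x u v q, r < wred red x q &
                 wred red x q <= c]).
Proof.
move=> c0; rewrite /Delta; set S := [set t | _].
case: (pselect (exists q, minimal_path src tgt red x u v q /\ r < wred red x q))
  => [ne|ne].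
  have hS : forall t, S t <-> exists q, (minimal_path src tgt red x u v q /\ r < wred red x q) /\ t = wred red x q.
    move=> t; split => [[q [m rq ->]]|[q [[m rq] ->]]]; by exists q.
  have hQ : forall q, minimal_path src tgt red x u v q /\ r < wred red x q -> is_path src tgt u v q.
    by move=> q [[hp _] _].
  have [q0 [[m0 r0] -> H0]] := inf_min hS hQ ne.
  split => [le|[//|[q [m rq le]]]]; first by right; exists q0.
  exact: le_trans (H0 q (conj m rq)) le.
have -> : S = set0.
  by apply/seteqP; split => // t [q [m rq _]]; apply: ne; exists q.
by rewrite inf0; split => _; [left | exact: c0].
Qed.

End Comb2.

Section Comb3.
Variables (R : realType) (V E : finType) (src tgt : E -> V) (red : E -> bool) (u v : V).

Definition valid (x : E -> R) (e : E) (r : R) (cp cq : Code E) : bool :=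
  [&& [&& okc src tgt u v cp, e \notin dec cp, rest red x e (dec cp) <= r &
        all (fun c => ~~ [&& okc src tgt u v c, e \notin dec c & rest red x e (dec c) <= r]
                      || (wgreen red x (dec cp) <= wgreen red x (dec c))) (enum (Code E))],
      [&& okc src tgt u v cq, e \in dec cq & wgreen red x (dec cq) < wgreen red x (dec cp)] &
      all (fun c => ~~ [&& okc src tgt u v c, e \in dec c &
                          wgreen red x (dec c) < wgreen red x (dec cp)]
                    || (rest red x e (dec cq) <= rest red x e (dec c))) (enum (Code E))].

Lemma valid_uniq x e r cp cq cp' cq' : valid x e r cp cq -> valid x e r cp' cq' ->
  rest red x e (dec cq) = rest red x e (dec cq').
Proof.
case/and3P => /and4P [okp nep rp Ap] /and3P [okq eq gq] Aq.
case/and3P => /and4P [okp' nep' rp' Ap'] /and3P [okq' eq' gq'] Aq'.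
have gg : wgreen red x (dec cp) = wgreen red x (dec cp').
  apply/eqP; rewrite eq_le; apply/andP; split.
    by move/allP: Ap => /(_ cp' (in_enumT _)); rewrite okp' nep' rp'.
  by move/allP: Ap' => /(_ cp (in_enumT _)); rewrite okp nep rp.
apply/eqP; rewrite eq_le; apply/andP; split.
  by move/allP: Aq => /(_ cq' (in_enumT _)); rewrite okq' eq' gg gq'.
by move/allP: Aq' => /(_ cq (in_enumT _)); rewrite okq eq -gg gq.
Qed.

Lemma comb_main (x : E -> R) r eps (hx : forall i, 0 < x i) (hr : 0 <= r)
  (heps : 0 < eps)
  (hg : exists s, is_path src tgt u v s && all (fun e => ~~ red e) s)
  (hrd : exists s, is_path src tgt u v s && all red s) :
  r < r_tot src tgt red x u v -> Delta src tgt red x u v r <= r + eps ->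
  exists e, red e /\ exists cp cq, valid x e r cp cq /\
     r < x e + rest red x e (dec cq) <= r + eps.
Proof.
move=> H1 H2.
have Hred := (rtotP x r hrd).1 H1.
have x0 : forall i, 0 <= x i by move=> i; exact: ltW.
have [ps [[pps rps] Hps]] := min_path (src := src) (tgt := tgt) (u := u) (v := v)
  (Q := fun p => is_path src tgt u v p /\ wred red x p <= r)
  (wgreen red x) (fun s h => proj1 h) ltac:(case: hg => sg /andP [pg ag]; exists sg; split => //;
                           by rewrite /wred sum0_all).
have gpos : 0 < wgreen red x ps.
  rewrite /wgreen; apply: sum_pos => //.
  apply/contraT => /hasPn hn.
  have ar : all red ps by apply/allP => i /hn; rewrite negbK.
  by have := Hred ps pps ar; rewrite ltNge rps.
have [qs [[pqs gqs] Hqs]] := min_path (src := src) (tgt := tgt) (u := u) (v := v)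
  (Q := fun q => is_path src tgt u v q /\ wgreen red x q < wgreen red x ps)
  (wred red x) (fun s h => proj1 h) ltac:(case: hrd => sr /andP [pr ar]; exists sr; split => //;
     by rewrite /wgreen sum0_all //; apply/allP => i /(allP ar); rewrite negbK).
have rq : r < wred red x qs.
  rewrite ltNge; apply/negP => le.
  by have := Hps qs (conj pqs le); rewrite leNgt gqs.
have qle : wred red x qs <= r + eps.
  have c0 : 0 <= r + eps by rewrite addr_ge0 // ltW.
  have [nex|[q [m rq' le]]] := (DeltaP src tgt red u v x r c0).1 H2.
    exfalso.
    have [qq [[pqq gqq lqq] Hqq]] := min_path (src := src) (tgt := tgt) (u := u) (v := v)
      (Q := fun q => [/\ is_path src tgt u v q, wgreen red x q < wgreen red x ps &
                       wred red x q <= wred red x qs])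
      (wgreen red x) (fun s h => let: And3 a _ _ := h in a) (ex_intro _ qs (And3 pqs gqs (lexx _))).
    have eqq : wred red x qq = wred red x qs.
      by apply/eqP; rewrite eq_le lqq (Hqs qq (conj pqq gqq)).
    apply: nex; exists qq; split; last by rewrite eqq.
    split => // [[q' [pq' h1 h2 h3]]].
    have gq' : wgreen red x q' < wgreen red x ps := le_lt_trans h2 gqq.
    have l1 := Hqs q' (conj pq' gq').
    have l2 := Hqq q' (And3 pq' gq' (le_trans h1 lqq)).
    have e1 : wred red x q' = wred red x qq.
      by apply/eqP; rewrite eq_le h1 eqq l1.
    have e2 : wgreen red x q' = wgreen red x qq.
      by apply/eqP; rewrite eq_le h2 l2.
    by move: h3; rewrite e1 e2 !ltxx.
  have gq : wgreen red x q < wgreen red x ps.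
    rewrite ltNge; apply/negP => le0; case: m => hpq hn; apply: hn.
    exists ps; split => //.
      exact: le_trans rps (ltW rq').
    by rewrite (le_lt_trans rps rq').
  exact: le_trans (Hqs q (conj (proj1 m) gq)) le.
have [e eqs /andP [re nep]] : exists2 e, e \in qs & red e && (e \notin ps).
  apply/hasP; apply/contraT => /hasPn hn.
  have : wred red x qs <= wred red x ps.
    apply: sum_sub => //; [exact: path_uniq pqs | exact: path_uniq pps | ].
    by move=> i iq ri; move: (hn i iq); rewrite ri /= negbK.
  by rewrite leNgt (le_lt_trans rps rq).
exists e; split => //.
have [dps okps] := path_code pps; have [dqs okqs] := path_code pqs.
exists (enc ps), (enc qs); rewrite dqs -wred_split //; last exact: path_uniq pqs.
split; last by rewrite rq qle.
rewrite /valid dps dqs okps okqs eqs nep rest_notin // rps gqs /=.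
apply/andP; split; apply/allP => c _; rewrite -implybE; apply/implyP.
  move=> /and3P [ok1 nec lec]; rewrite rest_notin // in lec.
  exact: Hps.
move=> /and3P [ok1 ec gc].
have := Hqs _ (conj ok1 gc).
rewrite (wred_split x (path_uniq pqs) eqs re) (wred_split x (path_uniq ok1) ec re).
by rewrite lerD2l.
Qed.

End Comb3.

Section Indep.
Context (R : realType) d (Omega : measurableType d) (P : probability Omega R)
  (E : finType) (red : E -> bool) (W : E -> Omega -> R).
Hypothesis mW : forall e, red e -> measurable_fun setT (W e).
Hypothesis ind : independent_rvs P red W.
Variable e : E.
Hypothesis re : red e.

Definition Cyl : set (set Omega) := [set X | exists (S : {set E}) (A : E -> set R),
   [/\ (forall i, i \in S -> red i && (i != e)), (forall i, measurable (A i)) &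
       X = \bigcap_(i in [set i | i \in S]) (W i @^-1` A i)]].
Definition Hc : set (set Omega) := [set X | Cyl X /\ X `<=` setT].

Lemma pre_meas i (A : set R) : red i -> measurable A -> measurable (W i @^-1` A).
Proof. by move=> ri mA; have := mW ri measurableT mA; rewrite setTI. Qed.

Lemma cyl_meas X : Cyl X -> measurable X.
Proof.
case=> S [A [hS mA ->]]; apply: fin_bigcap_measurable; first exact: finite_finset.
by move=> i /= iS; case/andP: (hS i iS) => ri _; exact: pre_meas.
Qed.

Lemma Hc_setI : setI_closed Hc.
Proof.
move=> X Y [[S1 [A1 [h1 m1 ->]]] _] [[S2 [A2 [h2 m2 ->]]] _]; split => //.
exists (S1 :|: S2), (fun i => (if i \in S1 then A1 i else setT) `&`
                              (if i \in S2 then A2 i else setT)); split.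
- by move=> i; rewrite finset.in_setU => /orP [] ?; [exact: h1|exact: h2].
- move=> i; apply: measurableI; case: ifP => _ //; by [apply: m1|apply: m2].
- apply/seteqP; split => o.
    move=> [H1 H2] i /=; rewrite finset.in_setU => iS; split.
      by case: ifP => Hi //; apply: H1; rewrite /= Hi.
    by case: ifP => Hi //; apply: H2; rewrite /= Hi.
  move=> H; split => i /= iS; have := H i; rewrite /= finset.in_setU iS ?orbT => /(_ isT) [a b].
    exact: a.
  exact: b.
Qed.

Lemma indep_cyl X J : Cyl X -> measurable J ->
  P (X `&` W e @^-1` J) = (P (W e @^-1` J) * P X)%E.
Proof.
case=> S [A [hS mA ->]] mJ.
have eS : e \notin S by apply/negP => /hS; rewrite eqxx andbF.
have ne : forall i, i \in S -> (i == e) = false.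
  by move=> i iS; apply/negbTE; apply: contraNneq eS => <-.
pose A' i := if i == e then J else A i.
have mA' : forall i, measurable (A' i) by move=> i; rewrite /A'; case: eqP.
have hS' : forall i, i \in e |: S -> red i.
  by move=> i; rewrite finset.in_setU1 => /orP [/eqP ->|/hS /andP []].
have hS0 : forall i, i \in S -> red i by move=> i /hS /andP [].
have := ind hS' mA'; rewrite big_setU1 //=.
have -> : \bigcap_(i in [set i | i \in e |: S]) (W i @^-1` A' i) =
  (\bigcap_(i in [set i | i \in S]) (W i @^-1` A i)) `&` W e @^-1` J.
  apply/seteqP; split => o.
    move=> H; split.
      by move=> i /= iS; have := H i; rewrite /= finset.in_setU1 iS orbT /A' ne //; apply.
    by have := H e; rewrite /= finset.in_setU1 eqxx /A' eqxx; apply.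
  move=> [H1 H2] i /=; rewrite finset.in_setU1 /A' => /orP [/eqP ->|iS].
    by rewrite eqxx.
  by rewrite ne //; exact: H1.
move=> ->; rewrite /A' eqxx (ind hS0 mA); congr (_ * _)%E.
by apply: eq_bigr => i iS; rewrite ne.
Qed.

Lemma Hc_meas : Hc `<=` measurable.
Proof. by move=> X [CX _]; exact: cyl_meas. Qed.

Lemma sigma_meas B : <<s setT, Hc >> B -> measurable B.
Proof.
apply: smallest_sub; first exact: sigma_algebra_measurable.
by move=> X [CX _]; exact: cyl_meas.
Qed.

Lemma indep_sigma J B : measurable J -> <<s setT, Hc >> B ->
  P (B `&` W e @^-1` J) = (P (W e @^-1` J) * P B)%E.
Proof.
move=> mJ sB.
have mC : measurable (W e @^-1` J) by exact: pre_meas.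
have fin : P (W e @^-1` J) \is a fin_num.
  by rewrite ge0_fin_numE ?measure_ge0 // (le_lt_trans (probability_le1 _ mC)) ?ltry.
have c0 : 0 <= fine (P (W e @^-1` J)) by apply: fine_ge0; exact: measure_ge0.
have cE : (fine (P (W e @^-1` J)))%:E = P (W e @^-1` J) by rewrite fineK.
pose m1 := mrestr P mC.
pose m2 := mscale (NngNum c0) P.
have := @g_sigma_algebra_measure_unique_trace _ _ _ Cyl setT measurableT Hc_meas Hc_setI m1 m2.
move=> /(_ _ _ _ _ B sB).
move=> H.
have E1 : forall X, mrestr P mC X = P (X `&` W e @^-1` J) by [].
have E2 : forall X, mscale (NngNum c0) P X = ((fine (P (W e @^-1` J)))%:E * P X)%E by [].
rewrite -E1 H.
- by rewrite -[X in _ = (X * _)%E]cE.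
- transitivity (P (W e @^-1` J)); first by have := E1 setT; rewrite setTI.
  transitivity ((fine (P (W e @^-1` J)))%:E * P setT)%E.
    by rewrite probability_setT mule1 cE.
  exact: esym (E2 setT).
- move=> A [CA _]; transitivity (P (A `&` W e @^-1` J)); first exact: E1.
  rewrite indep_cyl // -[X in (X * _)%E]cE; exact: esym (E2 A).
- apply: (@le_lt_trans _ _ (P (W e @^-1` J))); last first.
    by rewrite (le_lt_trans (probability_le1 _ mC)) ?ltry.
  by rewrite le_eqVlt; apply/orP; left; apply/eqP; have := E1 setT; rewrite setTI.
- by [].
Qed.

Lemma W_alias i : red i -> i != e ->
  measurable_fun (setT : set (g_sigma_algebraType Hc)) (W i).
Proof.
move=> ri ie _ Y mY; rewrite setTI.
apply: sub_gen_smallest; split => //.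
exists [set i]%SET, (fun _ => Y); split => //.
  by move=> j; rewrite finset.in_set1 => /eqP ->; rewrite ri ie.
apply/seteqP; split => o /=.
  by move=> Wo j /= /set1P ->.
by move=> H; apply: H; exact/set1P.
Qed.

End Indep.

Lemma MR_shift d0 (T : measurableType d0) (R : realType) (F : T -> R) (a b : R) :
  measurable_fun setT F -> measurable_fun setT (fun x => a - F x + b).
Proof.
move=> mF.
have -> : (fun x => a - F x + b) = (fun x => a - F x) \+ (fun=> b) by [].
apply: measurable_realfun.measurable_funD; last exact: measurable_cst.
have -> : (fun x => a - F x) = (fun=> a) \- F by [].
by apply: measurable_realfun.measurable_funB => //; exact: measurable_cst.
Qed.

Section Main.
Context (R : realType) (d : measure_display) (Omega : measurableType d)
  (P : probability Omega R)
  (V E : finType) (src tgt : E -> V) (red : E -> bool) (u v : V)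
  (wg : E -> R) (W : E -> Omega -> R) (f : E -> R -> R) (phi : E -> R).
Hypothesis hgreen : forall e, ~~ red e -> 0 < wg e.
Hypothesis hG : exists s, is_path src tgt u v s && all (fun e => ~~ red e) s.
Hypothesis hR : exists s, is_path src tgt u v s && all red s.
Hypothesis mW : forall e, red e -> measurable_fun setT (W e).
Hypothesis ind : independent_rvs P red W.
Hypothesis phi0 : forall e, red e -> 0 < phi e.
Hypothesis mf : forall e, red e -> measurable_fun setT (f e).
Hypothesis f0 : forall e, red e -> forall x, x <= 0 -> f e x = 0.
Hypothesis fphi : forall e, red e -> forall x, 0 < x -> 0 <= f e x <= phi e.
Hypothesis dens : forall e, red e -> has_density P (W e) (f e).
Variables r eps : R.
Hypothesis hr : 0 <= r.
Hypothesis heps : 0 < eps.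

Definition w (o : Omega) : E -> R := fun e => if red e then W e o else wg e.

Lemma mw i : measurable_fun setT (fun o => w o i).
Proof.
rewrite /w; case: (boolP (red i)) => ri; [exact: mW | exact: measurable_cst].
Qed.

Lemma m_wred s : measurable_fun setT (fun o => wred red (w o) s).
Proof. by apply: MR_sum => i _; exact: mw. Qed.

Lemma m_wgreen s : measurable_fun setT (fun o => wgreen red (w o) s).
Proof. by apply: MR_sum => i _; exact: mw. Qed.

Definition beta (o : Omega) : bool :=
  all (fun c => ~~ (okc src tgt u v c && all red (dec c)) || (r < wred red (w o) (dec c)))
      (enum (Code E))
  && (all (fun c => ~~ [&& okc src tgt u v c, mincode src tgt red u v (w o) (dec c) &
                          r < wred red (w o) (dec c)]) (enum (Code E))
      || has (fun c => [&& okc src tgt u v c, mincode src tgt red u v (w o) (dec c),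
                          r < wred red (w o) (dec c) & wred red (w o) (dec c) <= r + eps])
             (enum (Code E))).

Lemma Eset_eq : [set o | r < r_tot src tgt red (w o) u v /\
                         Delta src tgt red (w o) u v r <= r + eps] = [set o | beta o].
Proof.
have c0 : 0 <= r + eps by rewrite addr_ge0 // ltW.
apply/seteqP; split => o /=.
  move=> [H1 H2]; apply/andP; split.
    apply/allP => c _; rewrite -implybE; apply/implyP => /andP [ok1 ar].
    exact: ((rtotP (w o) r hR).1 H1) _ ok1 ar.
  case: ((DeltaP src tgt red u v (w o) r c0).1 H2) => [nex|[q [m rq le]]].
    apply/orP; left; apply/allP => c _; apply/negP => /and3P [ok1 mc rc].
    by apply: nex; exists (dec c); split => //; exact/minimalP.
  apply/orP; right; apply/hasP; have [dq okq] := path_code (proj1 m).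
  exists (enc q); first exact: in_enumT.
  by rewrite okq dq rq le ((minimalP _ _ _ _ _ _ _).1 m).
move=> /andP [/allP A1 B1]; split.
  apply/(rtotP (w o) r hR) => s ps ars; have [ds oks] := path_code ps.
  by have := A1 (enc s) (in_enumT _); rewrite oks ds ars.
apply/(DeltaP src tgt red u v (w o) r c0).
case/orP: B1 => [/allP A2|/hasP [c _ /and4P [ok1 mc rc le]]].
  left => -[q [m rq]]; have [dq okq] := path_code (proj1 m).
  by have := A2 (enc q) (in_enumT _); rewrite okq dq rq ((minimalP _ _ _ _ _ _ _).1 m).
by right; exists (dec c); split => //; exact/minimalP.
Qed.

Ltac mbt := repeat first [ apply: MB_cst | apply: MB_and | apply: MB_or | apply: MB_neg
  | (apply: MB_all => ?) | (apply: MB_has => ?) | apply: MB_le | apply: MB_lt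
  | exact: measurable_cst | exact: m_wred | exact: m_wgreen ].

Lemma beta_meas : measurable [set o | beta o].
Proof.
apply: MB_set; rewrite /beta /mincode /dom.
mbt.
Qed.


Section Edge.
Variable e : E.
Hypothesis re : red e.
Variable dl : R.
Hypothesis hdl : 0 < dl.

Local Notation T' := (g_sigma_algebraType (Hc red W e)).

Lemma m_rest_alias s :
  measurable_fun (setT : set T') (fun o : T' => rest red (w o) e s).
Proof.
apply: MR_sum => i /andP [ri ie].
by rewrite /w ri; exact: W_alias.
Qed.

Lemma m_wgreen_alias s :
  measurable_fun (setT : set T') (fun o : T' => wgreen red (w o) s).
Proof.
apply: MR_sum => i ri.
by rewrite /w (negbTE ri); exact: measurable_cst.
Qed.

Definition Bk (k : nat) : set Omega := [set o | has (fun cp => has (fun cq =>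
   [&& valid src tgt red u v (w o) e r cp cq,
       k%:R * dl < r - rest red (w o) e (dec cq) + eps &
       r - rest red (w o) e (dec cq) + eps <= k.+1%:R * dl]) (enum (Code E)))
   (enum (Code E))].

Lemma Bk_sigma k : <<s setT, Hc red W e >> (Bk k).
Proof.
have : measurable (Bk k : set T'); last by [].
apply: MB_set; rewrite /valid.
repeat first [ apply: MB_cst | apply: MB_and | apply: MB_or | apply: MB_neg
  | (apply: MB_all => ?) | (apply: MB_has => ?) | apply: MB_le | apply: MB_lt
  | exact: measurable_cst | exact: m_rest_alias | exact: m_wgreen_alias
  | apply: MR_shift; exact: m_rest_alias ].
Qed.


Lemma Bk_meas k : measurable (Bk k).
Proof. exact: sigma_meas (Bk_sigma k). Qed.

Lemma Bk_disj : trivIset setT Bk.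
Proof.
move=> k k' _ _ [y [H1 H2]].
case/hasP: H1 => cp _ /hasP [cq _ /and3P [v1 l1 u1]].
case/hasP: H2 => cp' _ /hasP [cq' _ /and3P [v2 l2 u2]].
rewrite (valid_uniq v1 v2) in l1 u1.
apply/eqP; rewrite eqn_leq; apply/andP; split; rewrite leqNgt; apply/negP => lt.
  have h : k'.+1%:R * dl <= k%:R * dl by apply: ler_wpM2r; [exact: ltW | rewrite ler_nat].

  by have := lt_le_trans l1 u2; rewrite ltNge h.
have h : k.+1%:R * dl <= k'%:R * dl by apply: ler_wpM2r; [exact: ltW | rewrite ler_nat].

by have := lt_le_trans l2 u1; rewrite ltNge h.
Qed.


Lemma f_ge0 x : 0 <= f e x.
Proof.
have [x0|x0] := leP x 0; first by rewrite f0.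
by case/andP: (fphi re x0).
Qed.

Lemma f_le x : f e x <= phi e.
Proof.
have [x0|x0] := leP x 0; first by rewrite f0 // ltW // phi0.
by case/andP: (fphi re x0).
Qed.

Lemma dens_bound a b : a <= b -> (P (W e @^-1` `]a, b]) <= (phi e * (b - a))%:E)%E.
Proof.
move=> ab.
rewrite (dens re); last exact: measurable_itv.
have H : (\int[lebesgue_measure]_(x in `]a, b]) (f e x)%:E <=
   \int[lebesgue_measure]_(x in `]a, b]) (phi e)%:E)%E.
  apply: ge0_le_integral => //.
  - by move=> x _; rewrite lee_fin f_ge0.
  - by apply/measurable_realfun.measurable_EFinP; exact: measurable_funTS (mf re).
  - by move=> x _; rewrite lee_fin f_le.
apply: le_trans H _.
rewrite integral_cst /=; last exact: measurable_itv.
rewrite lebesgue_measure_itv /=; case: ifP => h.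
  by rewrite -EFinB -EFinM.
by rewrite mule0 lee_fin mulr_ge0 // ?subr_ge0 // ltW // phi0.
Qed.

Lemma null0 : P (W e @^-1` `]-oo, 0]) = 0%E.
Proof.
rewrite (dens re); last exact: measurable_itv.
apply: integral0_eq => x /=; rewrite in_itv /= => hx.
by rewrite f0.
Qed.

Variable K : nat.
Definition Ck (k : nat) := W e @^-1` `]k%:R * dl - eps, k.+1%:R * dl].
Definition Ev := W e @^-1` `]-oo, 0] `|` \big[setU/set0]_(k < K) (Bk k `&` Ck k).

Lemma Ck_meas k : measurable (Ck k).
Proof. exact: (pre_meas mW re (measurable_itv _)). Qed.

Lemma Ev_meas : measurable Ev.
Proof.
apply: measurableU; first exact: (pre_meas mW re (measurable_itv _)).
apply: bigsetU_measurable => k _; apply: measurableI; [exact: Bk_meas | exact: Ck_meas].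
Qed.

Lemma Ev_bound : (P Ev <= (phi e * (dl + eps))%:E)%E.
Proof.
have m1 : measurable (W e @^-1` `]-oo, 0]) by exact: (pre_meas mW re (measurable_itv _)).
have m2 : measurable (\big[setU/set0]_(k < K) (Bk k `&` Ck k)).
  by apply: bigsetU_measurable => k _; apply: measurableI; [exact: Bk_meas | exact: Ck_meas].
apply: le_trans (measureU2 P m1 m2) _.
rewrite [X in (X + _)%E](_ : _ = 0%E) ?add0e; last exact: null0.
apply: le_trans (@content_subadditive _ _ _ P _ (fun k => Bk k `&` Ck k) K _ m2 _) _.
- by move=> k _; apply: measurableI; [exact: Bk_meas | exact: Ck_meas].
- by [].
have -> : \sum_(k < K) P (Bk k `&` Ck k) = \sum_(k < K) (P (Ck k) * P (Bk k))%E.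
  apply: eq_bigr => k _; rewrite /Ck.
  exact: (indep_sigma mW ind re (measurable_itv _) (Bk_sigma k)).
apply: le_trans (lee_sum (g := fun k : 'I_K => ((phi e * (dl + eps))%:E * P (Bk k))%E) _ _) _.
  move=> k _; apply: lee_pmul => //.
  have ab : k%:R * dl - eps <= k.+1%:R * dl.
    rewrite -natr1 mulrDl mul1r; have := ltW heps; have := ltW hdl; lra.
  have := dens_bound ab.
  have -> : k.+1%:R * dl - (k%:R * dl - eps) = dl + eps by rewrite -natr1; ring.
  by [].
rewrite -ge0_sume_distrr //.
rewrite -(measure_bigsetU P (F := Bk)) //; last exact: Bk_disj.
  apply: le_trans (lee_pmul _ _ (lexx _) (probability_le1 _ _)) _ => //.
  - by rewrite lee_fin; apply: mulr_ge0; [exact: ltW (phi0 re) | apply: addr_ge0; exact: ltW].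
  - by apply: bigsetU_measurable => k _; exact: Bk_meas.
  - by rewrite mule1.
exact: Bk_meas.
Qed.

End Edge.

Lemma find_k (dl t : R) (K : nat) : 0 < dl -> 0 < t -> t <= K%:R * dl ->
  exists2 k, (k < K)%N & k%:R * dl < t <= k.+1%:R * dl.
Proof.
move=> hdl ht; elim: K => [|K IH] hK.
  by move: hK; rewrite mul0r => /(lt_le_trans ht); rewrite ltxx.
have [le|gt] := leP t (K%:R * dl).
  by have [k kK hk] := IH le; exists k => //; rewrite ltnS ltnW.
by exists K => //; rewrite gt hK.
Qed.

Lemma mem_bigU (I : eqType) (s : seq I) (Q : pred I) (F : I -> set Omega) i x :
  i \in s -> Q i -> F i x -> (\big[setU/set0]_(j <- s | Q j) F j) x.
Proof.
elim: s => // a s IH; rewrite inE => /orP [/eqP <- Qi Fi|iS Qi Fi]; rewrite big_cons.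
  by rewrite Qi; left.
by case: ifP => _; [right|]; exact: IH.
Qed.

Lemma measure_bigU_le (I : Type) (s : seq I) (Q : pred I) (F : I -> set Omega) :
  (forall i, Q i -> measurable (F i)) ->
  (P (\big[setU/set0]_(i <- s | Q i) F i) <= \sum_(i <- s | Q i) P (F i))%E.
Proof.
move=> mF; elim: s => [|a s IH]; first by rewrite !big_nil measure0.
rewrite !big_cons; case: ifP => Qa //.
apply: le_trans (measureU2 _ _ _) _; [exact: mF | exact: bigsetU_measurable | ].
exact: leeD2l.
Qed.

Lemma cover (dl : R) (K : nat) : 0 < dl -> K%:R * dl = r + eps ->
  [set o | beta o] `<=` \big[setU/set0]_(e | red e) Ev e dl K.
Proof.
move=> hdl hK o bo.
have [H1 H2] : r < r_tot src tgt red (w o) u v /\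
               Delta src tgt red (w o) u v r <= r + eps.
  by have : [set o | beta o] o by []; rewrite -Eset_eq.
case: (pselect (exists i, red i /\ W i o <= 0)) => [[i [ri Wi]]|nn].
  apply: (mem_bigU (i := i)) => //.
  by left; rewrite /= in_itv /=.
have hx : forall i, 0 < w o i.
  move=> i; rewrite /w; case: ifP => ri; last by apply: hgreen; rewrite ri.
  by rewrite ltNge; apply/negP => le; apply: nn; exists i.
have [e [re [cp [cq [vd /andP [lo hi]]]]]] := comb_main hx hr heps hG hR H1 H2.
have rest0 : 0 <= rest red (w o) e (dec cq).
  by apply: sumr_ge0 => i _; exact: ltW.
have t0 : 0 < r - rest red (w o) e (dec cq) + eps.
  by have := hx e; move: hi; lra.
have tK : r - rest red (w o) e (dec cq) + eps <= K%:R * dl.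
  by rewrite hK; move: rest0; lra.
have [k kK /andP [l1 u1]] := find_k hdl t0 tK.
apply: (mem_bigU (i := e)) => //.
right; apply: (mem_bigU (i := Ordinal kK)); [exact: mem_index_enum | by [] | ].
split.
  apply/hasP; exists cp; first exact: in_enumT.
  by apply/hasP; exists cq; [exact: in_enumT | rewrite vd l1 u1].
rewrite /Ck /= in_itv /=; move: lo hi l1 u1; rewrite /w re /=.
set a := W e o; set b := rest _ _ _ _; move=> lo hi l1 u1.
by apply/andP; split; lra.
Qed.

Lemma final_bound : (P [set o | (r < r_tot src tgt red (w o) u v)%R /\
                                (Delta src tgt red (w o) u v r <= r + eps)%R] <=
                     ((\sum_(e | red e) phi e) * eps)%:E)%E.
Proof.
rewrite Eset_eq.
set S := \sum_(e | red e) phi e.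
have S0 : 0 <= S by apply: sumr_ge0 => e re; exact: ltW (phi0 re).
have mB := beta_meas.
have fin : P [set o | beta o] \is a fin_num.
  by rewrite ge0_fin_numE ?measure_ge0 // (le_lt_trans (probability_le1 _ mB)) ?ltry.
have re0 : 0 < r + eps by rewrite ltr_wpDl.
have bound : forall n : nat, (P [set o | beta o] <=
   (S * ((r + eps) / n.+1%:R + eps))%:E)%E.
  move=> n; set dl := (r + eps) / n.+1%:R.
  have hdl : 0 < dl by rewrite divr_gt0 // ltr0n.
  have hK : n.+1%:R * dl = r + eps.
    by rewrite /dl mulrC divfK // pnatr_eq0.
  have mU : forall e, red e -> measurable (Ev e dl n.+1).
    by move=> e re; exact: Ev_meas.
  have le1 : (P [set o | beta o] <= P (\big[setU/set0]_(e | red e) Ev e dl n.+1))%E.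
    apply: le_measure; [by rewrite inE | | exact: cover hdl hK].
    by rewrite inE; apply: bigsetU_measurable.
  apply: le_trans le1 _.
  apply: le_trans (measure_bigU_le _ mU) _.
  rewrite /S big_distrl /= -sumEFin; apply: lee_sum => e re.
  have h := Ev_bound re hdl n.+1. exact h.
rewrite -(fineK fin) lee_fin.
apply/ler_addgt0Pr => eta eta0.
set p := fine _.
have hb : forall n : nat, p <= S * ((r + eps) / n.+1%:R + eps).
  by move=> n; rewrite -lee_fin /p fineK //; exact: bound.
set n := Num.Def.archi_bound (S * (r + eps) / eta).
have hn : S * (r + eps) / eta < n%:R.
  by apply: archi_boundP; rewrite divr_ge0 ?mulr_ge0 // ?ltW.
have hn' : S * (r + eps) / n.+1%:R < eta.
  rewrite ltr_pdivrMr ?ltr0n //.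
  move: hn; rewrite ltr_pdivrMr // => hn.
  apply: lt_le_trans hn _; rewrite mulrC.
  by apply: ler_wpM2l; [exact: ltW | rewrite ler_nat].
apply: le_trans (hb n) _.
rewrite mulrDr addrC lerD2l.
by rewrite mulrA ltW.
Qed.

End Main.

Unset Implicit Arguments.

Theorem corollary6 (R : realType) (d : measure_display) (Omega : measurableType d)
  (P : probability Omega R)
  (V E : finType) (src tgt : E -> V) (red : E -> bool) (u v : V)
  (wg : E -> R) (W : E -> Omega -> R) (f : E -> R -> R) (phi : E -> R) :
  (* green edges have fixed positive weights *)
  (forall e, ~~ red e -> 0 < wg e) ->
  (* there is an all-green path and an all-red path from u to v *)
  (exists s, is_path src tgt u v s && all (fun e => ~~ red e) s) ->
  (exists s, is_path src tgt u v s && all red s) ->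
  (* red weights: independent random variables with densities f e on (0, oo)
     bounded by phi e > 0 *)
  (forall e, red e -> measurable_fun setT (W e)) ->
  independent_rvs P red W ->
  (forall e, red e -> 0 < phi e) ->
  (forall e, red e -> measurable_fun setT (f e)) ->
  (forall e, red e -> forall x, x <= 0 -> f e x = 0) ->
  (forall e, red e -> forall x, 0 < x -> 0 <= f e x <= phi e) ->
  (forall e, red e -> has_density P (W e) (f e)) ->
  forall r eps : R, 0 <= r -> 0 < eps ->
  let w (o : Omega) : E -> R := fun e => if red e then W e o else wg e in
  (P [set o | (r < r_tot src tgt red (w o) u v)%R /\
             (Delta src tgt red (w o) u v r <= r + eps)%R] <=
  ((\sum_(e | red e) phi e) * eps)%:E)%E.
Proof.
move=> hgreen hG hR mW ind phi0 mf f0 fphi dens r eps hr heps.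
have H := final_bound hgreen hG hR mW ind phi0 mf f0 fphi dens hr heps.
exact H.
Qed.
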